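(* Let $n\ge 2$ and let $A=(a_{pq})\in\mathbb{R}^{n\times n}$ be the weighted adjacency matrix of a directed stem-bud network without self-loops, i.e., there is $y\in\{1,\dots,n-1\}$ such that $a_{pq}=0$ unless $(p,q)=(q+1,q)$ for some $q\in\{1,\dots,n-1\}$ or $(p,q)=(y,n)$ (this includes the directed line network, where also $a_{yn}=0$). Let $i_b\in\{1,\dots,n\}$, $b=e_{i_b}$, and let $T$ be a positive integer. Then the controllability Gramian $\mathcal{W}_{i_b}=\sum_{t=0}^{T-1}A^tbb^{\top}(A^t)^{\top}$ is a diagonal matrix.
   Context: $e_p$ denotes the $p$-th canonical unit vector in $\mathbb{R}^n$. In a directed stem-bud network the stem is the path $1\to2\to\cdots\to y$ and the bud is the cycle $y\to y+1\to\cdots\to n\to y$; the entry $a_{pq}$ is the weight of the edge $q\to p$. *)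

(* Defs.v *)
From mathcomp Require Import all_boot all_order all_algebra.
From mathcomp Require Import reals.
Set Implicit Arguments. Unset Strict Implicit. Unset Printing Implicit Defensive.
Import GRing.Theory Num.Theory.
Local Open Scope ring_scope.

Fixpoint mxpow (R : pzRingType) (n : nat) (A : 'M[R]_n) (t : nat) : 'M[R]_n :=
  match t with
  | 0 => 1%:M
  | t'.+1 => A *m mxpow A t'
  end.

Definition gramian (R : pzRingType) (n : nat) (A : 'M[R]_n) (b : 'cV[R]_n)
  (T : nat) : 'M[R]_n :=
  \sum_(t < T) (mxpow A t *m b *m b^T *m (mxpow A t)^T).

Definition unitvec (R : pzRingType) (n : nat) (i : 'I_n) : 'cV[R]_n :=
  delta_mx i 0.

Definition is_diagonal (R : pzRingType) (n : nat) (M : 'M[R]_n) : Prop :=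
  forall i j : 'I_n, i != j -> M i j = 0.

(* Main.v *)
Require Import Defs.
From mathcomp Require Import all_boot all_order all_algebra.
From mathcomp Require Import reals.
From mathcomp Require Import zify.
Local Open Scope ring_scope.
Import GRing.Theory.

Definition supp1 {R : realType} {n : nat} (v : 'cV[R]_n) :=
  exists k : 'I_n, forall i, i != k -> v i 0 = 0.

Theorem proposition4p1 (R : realType) (n : nat) (hn : (2 <= n)%N)
  (A : 'M[R]_n) (y : nat) (hy1 : (1 <= y)%N) (hy2 : (y <= n - 1)%N)
  (hA : forall i j : 'I_n, A i j != 0 ->
          (nat_of_ord i = (nat_of_ord j).+1) \/
          (nat_of_ord i = y.-1 /\ nat_of_ord j = n.-1))
  (ib : 'I_n) (T : nat) (hT : (0 < T)%N) :
  is_diagonal (gramian A (unitvec R ib) T).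
Proof.
have col : forall k i i' : 'I_n, A i k != 0 -> A i' k != 0 -> i = i'.
  move=> k i i' h1 h2; apply: val_inj; change (nat_of_ord i = nat_of_ord i').
  have lk := ltn_ord k; have li := ltn_ord i; have li' := ltn_ord i'.
  case: (hA _ _ h1) => [e1|[e1 e2]]; case: (hA _ _ h2) => [e3|[e3 e4]];
    rewrite -?subn1 in e1 e3 *; try rewrite -?subn1 in e2; try rewrite -?subn1 in e4; lia.
have step : forall v : 'cV[R]_n, supp1 v -> supp1 (A *m v).
  move=> v [k hk].
  have Av : forall i, (A *m v) i 0 = A i k * v k 0.
    move=> i; rewrite mxE (bigD1 k) //= big1 ?addr0 // => j hj.
    by rewrite hk ?mulr0.
  case: (pickP (fun i => A i k != 0)) => [i0 hi0|hnone].
    exists i0 => i hi; rewrite Av.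
    case: (eqVneq (A i k) 0) => [->|hne]; first by rewrite mul0r.
    by move: hi; rewrite (col _ _ _ hne hi0) eqxx.
  exists k => i _; rewrite Av.
  by move: (hnone i) => /negbFE/eqP ->; rewrite mul0r.
have pw : forall t, supp1 (mxpow A t *m unitvec R ib).
  elim=> [|t IH] /=.
    rewrite mul1mx; exists ib => i hi.
    by rewrite /unitvec mxE (negbTE hi).
  by rewrite -mulmxA; apply: step.
move=> i j hij; rewrite /gramian summxE big1 // => t _.
have [k hk] := pw t.
rewrite -[_ *m (mxpow A t)^T]mulmxA -trmx_mul mxE big_ord1 [X in _ * X]mxE.
case: (eqVneq i k) => [eik|nik]; last by rewrite hk ?mul0r.
subst k; rewrite [X in _ * X]hk ?mulr0 //; by rewrite eq_sym.
Qed.
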